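(* Let $n\ge 3$, let $m_1,m_2$ be positive integers with $m_1\mid m_2$, and let $F,R$ be as in the context. In $F/[R,F]$ the order of each of the following elements divides the stated number: (1) for $1\le i\le n-1$: $[s_i(1),s_i(x)]$ — $m_1$; (2) for $1\le i<j-1\le n-2$: $[s_i(1),s_j(1)]$ — $m_2$; $[s_i(x),s_j(x)][s_i(1),s_j(1)]^{-1}$ — $m_1$; $[s_i(x),s_j(1)][s_i(x),s_j(x)]^{-1}$ — $m_1$; $[s_i(1),s_j(x)][s_i(x),s_j(x)]^{-1}$ — $m_1$; (3) for $1\le i\le n-2$: $[s_i(1),s_{i+1}(x)][s_i(x),s_{i+1}(1)]^{-1}$ — $m_1$; $[s_i(x),s_{i+1}(x)][s_i(x),s_{i+1}(1)]^{-1}$ — $m_1$; (4) for $1\le i\le n-2$: $[s_i(1),s_{i+1}(1),s_i(1)]$ — $m_2$; $[s_i(1),s_{i+1}(1),s_{i+1}(1)s_i(1)^{-1}]$ — $\gcd(m_2,\binom{m_2}{2})$; $[s_i(1),s_{i+1}(1),s_i(x)s_i(1)^{-1}]$ — $m_1$; $[s_i(1),s_{i+1}(1),s_i(x)s_{i+1}(x)^{-1}(s_i(1)s_{i+1}(1)^{-1})^{-1}]$ — $\gcd(m_1,\binom{m_1}{2})$; (5) for $1\le i\le n-3$: $[s_i(1),s_{i+1}(1),s_{i+2}(1),s_{i+1}(1)]$ — $\gcd(2,m_2)$; $[s_i(1),s_{i+1}(1),s_{i+2}(1),s_{i+1}(x)s_{i+1}(1)^{-1}]$ — $\gcd(2,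m_1)$.
   Context: Commutator conventions: $[a,b]=a^{-1}b^{-1}ab$, $a^b=b^{-1}ab$, commutators left-normed: $[a_1,\dots,a_k]=[[a_1,\dots,a_{k-1}],a_k]$. Let $F$ be the free group on the $2(n-1)$ symbols $s_i(1),s_i(x)$, $1\le i\le n-1$. Write $s_i(1|x)$ for either of $s_i(1),s_i(x)$ (every choice is included). Let $R$ be the normal closure in $F$ of: $s_i(1)^{m_1}s_i(x)^{-m_1}$ and $s_i(x)^{m_2}$ ($1\le i\le n-1$); $[s_i(1),s_i(x)]$ ($1\le i\le n-1$); $[s_i(1|x),s_j(1|x)]$ ($1\le i<j-1\le n-2$); $[s_i(1|x)^{-1},s_{i+1}(x)^{-1}][s_i(x),s_{i+1}(1)]^{-1}$ ($1\le i\le n-2$); $[s_i(1|x),s_{i+1}(1),s_i(1)]$ and $[s_i(1|x),s_{i+1}(1),s_{i+1}(1)]$ ($1\le i\le n-2$); $[[s_i(1|x),s_{i+1}(1)],[s_{i+1}(1|x),s_{i+2}(1)]]$ ($1\le i\le n-3$). It is known that $F/R\cong\mathrm{UT}_n(\mathbb Z/m_1\mathbb Z\times\mathbb Z/m_2\mathbb Z)$ via $s_i(\lambda)\mapsto I+\lambda E_{i,i+1}$, where $1=(1,1)$ and $x=(0,1)$. *)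

(* Defs.v *)
(* Free groups are not in MathComp, so we build
   the free group on a set of symbols as words modulo free reduction, and
   subgroups (normal closure, [R,F]) as inductively generated sets of words
   closed under free equivalence. *)
From mathcomp Require Import all_boot.
Set Implicit Arguments. Unset Strict Implicit. Unset Printing Implicit Defensive.

(* A letter is a symbol with an inversion flag (true = inverse). *)
Definition word (X : Type) := seq (X * bool).

Definition wone {X : Type} : word X := [::].
Definition wmul {X : Type} (u v : word X) : word X := u ++ v.
Definition flipl {X : Type} (l : X * bool) : X * bool := (l.1, ~~ l.2).
Definition winv {X : Type} (u : word X) : word X := rev (map flipl u).
Definition wpow {X : Type} (u : word X) (k : nat) : word X := flatten (nseq k u).
Definition wcomm {X : Type} (a b : word X) : word X :=
  wmul (wmul (wmul (winv a) (winv b)) a) b.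

Inductive red1 {X : Type} : word X -> word X -> Prop :=
| red1_step (u v : word X) (l : X * bool) : red1 (u ++ [:: l; flipl l] ++ v) (u ++ v).

Inductive feq {X : Type} : word X -> word X -> Prop :=
| feq_refl u : feq u u
| feq_step u v : red1 u v -> feq u v
| feq_sym u v : feq u v -> feq v u
| feq_trans u v w : feq u v -> feq v w -> feq u w.

Inductive ncl {X : Type} (S : word X -> Prop) : word X -> Prop :=
| ncl_one : ncl S wone
| ncl_conj r g : S r -> ncl S (wmul (wmul (winv g) r) g)
| ncl_mul a b : ncl S a -> ncl S b -> ncl S (wmul a b)
| ncl_inv a : ncl S a -> ncl S (winv a)
| ncl_feq a b : feq a b -> ncl S a -> ncl S b.

Inductive gsub {X : Type} (S : word X -> Prop) : word X -> Prop :=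
| gsub_one : gsub S wone
| gsub_base a : S a -> gsub S a
| gsub_mul a b : gsub S a -> gsub S b -> gsub S (wmul a b)
| gsub_inv a : gsub S a -> gsub S (winv a)
| gsub_feq a b : feq a b -> gsub S a -> gsub S b.

Definition commRF {X : Type} (N : word X -> Prop) : word X -> Prop :=
  gsub (fun w => exists r f, N r /\ w = wcomm r f).

Unset Implicit Arguments.
Inductive lam := L1 | Lx.

(* the 2(n-1) symbols s_i(1), s_i(x), 1 <= i <= n-1; the ordinal k stands
   for i = k+1 *)
Definition sym (n : nat) := ('I_(n.-1) * lam)%type.

(* s_i(l) as an element of F (only used for 1 <= i <= n-1) *)
Definition s (n : nat) (i : nat) (l : lam) : word (sym n) :=
  match @insub nat (fun k => k < n.-1) _ i.-1 with
  | Some k => [:: ((k, l), false)]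
  | None => [::]
  end.

Definition Rel (n m1 m2 : nat) (w : word (sym n)) : Prop :=
  (exists i, [/\ 1 <= i, i <= n - 1 &
        w = wmul (wpow (s n i L1) m1) (winv (wpow (s n i Lx) m1))]) \/
      (exists i, [/\ 1 <= i, i <= n - 1 & w = wpow (s n i Lx) m2]) \/
      (exists i, [/\ 1 <= i, i <= n - 1 & w = wcomm (s n i L1) (s n i Lx)]) \/
      (exists i j a b, [/\ 1 <= i, i < j - 1, j - 1 <= n - 2 &
        w = wcomm (s n i a) (s n j b)]) \/
    (exists i a, [/\ 1 <= i, i <= n - 2 &
        [\/ w = wmul (wcomm (winv (s n i a)) (winv (s n i.+1 Lx)))
                     (winv (wcomm (s n i Lx) (s n i.+1 L1))),
            w = wcomm (wcomm (s n i a) (s n i.+1 L1)) (s n i L1),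
            w = wcomm (wcomm (s n i a) (s n i.+1 L1)) (s n i.+1 L1)
          | i <= n - 3 /\ (exists b,
            w = wcomm (wcomm (s n i a) (s n i.+1 L1))
                      (wcomm (s n i.+1 b) (s n i.+2 L1)))]]).

Definition Rn (n m1 m2 : nat) : word (sym n) -> Prop := ncl (Rel n m1 m2).

Definition RF (n m1 m2 : nat) : word (sym n) -> Prop := commRF (Rn n m1 m2).

(* the order of the image of g in F/[R,F] divides d, i.e. g^d lies in [R,F] *)
Definition ord_dvd (n m1 m2 : nat) (g : word (sym n)) (d : nat) : Prop :=
  RF n m1 m2 (wpow g d).

(* Main.v *)
Require Import Defs.
From mathcomp Require Import all_boot.
From Stdlib Require Import FunctionalExtensionality PropExtensionality ProofIrrelevance ClassicalEpsilon.
Set Implicit Arguments. Unset Strict Implicit. Unset Printing Implicit Defensive.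
From mathcomp Require Import zify.

Lemma flipK X (l : X * bool) : flipl (flipl l) = l.
Proof. by case: l => x b; rewrite /flipl /= negbK. Qed.
Lemma winv_cat X (u v : word X) : winv (u ++ v) = winv v ++ winv u.
Proof. by rewrite /winv map_cat rev_cat. Qed.
Lemma winvK X (u : word X) : winv (winv u) = u.
Proof. by rewrite /winv map_rev revK -map_comp (eq_map (@flipK X)) map_id. Qed.
Lemma winv_cons X l (u : word X) : winv (l :: u) = winv u ++ [:: flipl l].
Proof. by rewrite /winv /= rev_cons cats1. Qed.

Lemma feq_symm X (u v : word X) : feq u v -> feq v u. Proof. exact: feq_sym. Qed.
Lemma feq_catl X (w u v : word X) : feq u v -> feq (w ++ u) (w ++ v).
Proof.
elim=> [u0|u0 v0 []|u0 v0 _ IH|u0 v0 z0 _ IH1 _ IH2].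
- exact: feq_refl.
- move=> u1 v1 l; apply: feq_step; have := red1_step (w ++ u1) v1 l; by rewrite -!catA.
- exact: feq_sym.
- exact: feq_trans IH1 IH2.
Qed.
Lemma feq_catr X (w u v : word X) : feq u v -> feq (u ++ w) (v ++ w).
Proof.
elim=> [u0|u0 v0 []|u0 v0 _ IH|u0 v0 z0 _ IH1 _ IH2].
- exact: feq_refl.
- move=> u1 v1 l; apply: feq_step; have := red1_step u1 (v1 ++ w) l; by rewrite -!catA.
- exact: feq_sym.
- exact: feq_trans IH1 IH2.
Qed.
Lemma feq_cat X (u u' v v' : word X) : feq u u' -> feq v v' -> feq (u ++ v) (u' ++ v').
Proof. by move=> h1 h2; apply: feq_trans (feq_catr _ h1) (feq_catl _ h2). Qed.
Lemma feq_inv X (u v : word X) : feq u v -> feq (winv u) (winv v).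
Proof.
elim=> [u0|u0 v0 []|u0 v0 _ IH|u0 v0 z0 _ IH1 _ IH2].
- exact: feq_refl.
- move=> u1 v1 l; apply: feq_step; rewrite !winv_cat.
  have -> : winv [:: l; flipl l] = [:: l; flipl l] by rewrite /winv /= flipK.
  by rewrite -catA; apply: red1_step.
- exact: feq_sym.
- exact: feq_trans IH1 IH2.
Qed.
Lemma feq_invr X (u : word X) : feq (u ++ winv u) [::].
Proof.
elim: u => [|l u IH] /=; first exact: feq_refl.
rewrite winv_cons catA.
apply: feq_trans (_ : feq ([:: l] ++ [::] ++ [:: flipl l]) [::]).
  apply: (feq_catl [:: l]); exact: feq_catr.
apply: feq_step; exact: (red1_step [::] [::] l).
Qed.
Lemma feq_invl X (u : word X) : feq (winv u ++ u) [::].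
Proof. by have := feq_invr (winv u); rewrite winvK. Qed.

Record Grp := Build_Grp {
  car :> Type;
  gm : car -> car -> car;
  gi : car -> car;
  g1 : car;
  gmA : forall x y z, gm x (gm y z) = gm (gm x y) z;
  gm1l : forall x, gm g1 x = x;
  gmVl : forall x, gm (gi x) x = g1 }.
Arguments gm {_}. Arguments gi {_}. Arguments g1 {_}.

Declare Scope grp_scope.
Delimit Scope grp_scope with gr.
Notation "x * y" := (gm x y) : grp_scope.
Notation "x ^-1" := (gi x) : grp_scope.
Local Open Scope grp_scope.

Lemma mulgA (G : Grp) (x y z : G) : x * (y * z) = x * y * z. Proof. exact: gmA. Qed.
Lemma mul1g (G : Grp) (x : G) : g1 * x = x. Proof. exact: gm1l. Qed.
Lemma mulVg (G : Grp) (x : G) : x^-1 * x = g1. Proof. exact: gmVl. Qed.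
Lemma mulKg (G : Grp) (x y : G) : x^-1 * (x * y) = y.
Proof. by rewrite mulgA mulVg mul1g. Qed.
Lemma mulgV (G : Grp) (x : G) : x * x^-1 = g1.
Proof. have h := mulKg (x^-1) (x * x^-1). rewrite (mulKg x (x^-1)) mulVg in h. by rewrite -h. Qed.
Lemma mulg1 (G : Grp) (x : G) : x * g1 = x.
Proof. by rewrite -(mulVg x) mulgA mulgV mul1g. Qed.
Lemma mulKVg (G : Grp) (x y : G) : x * (x^-1 * y) = y.
Proof. by rewrite mulgA mulgV mul1g. Qed.
Lemma mulgK (G : Grp) (x y : G) : x * y * y^-1 = x.
Proof. by rewrite -mulgA mulgV mulg1. Qed.
Lemma mulgKV (G : Grp) (x y : G) : x * y^-1 * y = x.
Proof. by rewrite -mulgA mulVg mulg1. Qed.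
Lemma invg_eq (G : Grp) (x y : G) : x * y = g1 -> x^-1 = y.
Proof. by move=> h; rewrite -(mulKg x y) h mulg1. Qed.
Lemma invgK (G : Grp) (x : G) : (x^-1)^-1 = x.
Proof. by apply: invg_eq; rewrite mulVg. Qed.
Lemma invMg (G : Grp) (x y : G) : (x * y)^-1 = y^-1 * x^-1.
Proof. by apply: invg_eq; rewrite mulgA -(mulgA x) mulgV mulg1 mulgV. Qed.
Lemma inv1g (G : Grp) : (g1 : G)^-1 = g1.
Proof. by apply: invg_eq; rewrite mul1g. Qed.
Lemma mulgI (G : Grp) (x y z : G) : x * y = x * z -> y = z.
Proof. by move=> h; rewrite -(mulKg x y) h mulKg. Qed.
Lemma mulIg (G : Grp) (x y z : G) : y * x = z * x -> y = z.
Proof. by move=> h; rewrite -(mulgK y x) h mulgK. Qed.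

Ltac gnorm := rewrite ?invMg ?invgK ?inv1g; rewrite ?mulgA;
  rewrite ?mulgK ?mulgKV ?mulgV ?mulVg ?mulg1 ?mul1g;
  rewrite ?mulgK ?mulgKV ?mulgV ?mulVg ?mulg1 ?mul1g.

Definition comm (G : Grp) (x y : G) := x^-1 * y^-1 * x * y.
Definition conj (G : Grp) (x y : G) := y^-1 * x * y.
Fixpoint pow (G : Grp) (x : G) (k : nat) : G := if k is k'.+1 then x * pow x k' else g1.

Lemma conjE (G : Grp) (x g : G) : conj x g = x * comm x g.
Proof. by rewrite /conj /comm; gnorm. Qed.
Lemma commE (G : Grp) (x g : G) : comm x g = x^-1 * conj x g.
Proof. by rewrite conjE mulKg. Qed.
Lemma conjM (G : Grp) (x y g : G) : conj (x * y) g = conj x g * conj y g.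
Proof. by rewrite /conj; gnorm. Qed.
Lemma conjV (G : Grp) (x g : G) : conj (x^-1) g = (conj x g)^-1.
Proof. by rewrite /conj; gnorm. Qed.
Lemma conj1 (G : Grp) (g : G) : conj g1 g = g1.
Proof. by rewrite /conj; gnorm. Qed.
Lemma conjg1 (G : Grp) (x : G) : conj x g1 = x.
Proof. by rewrite /conj; gnorm. Qed.
Lemma conj_comm (G : Grp) (x y g : G) : conj (comm x y) g = comm (conj x g) (conj y g).
Proof. by rewrite /comm !conjM !conjV. Qed.
Lemma conjMr (G : Grp) (x g h : G) : conj x (g * h) = conj (conj x g) h.
Proof. by rewrite /conj; gnorm. Qed.
Lemma conjK (G : Grp) (x g : G) : conj (conj x g) g^-1 = x.
Proof. by rewrite /conj; gnorm. Qed.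
Lemma conjKV (G : Grp) (x g : G) : conj (conj x g^-1) g = x.
Proof. by rewrite /conj; gnorm. Qed.
Lemma commVg (G : Grp) (x y : G) : (comm x y)^-1 = comm y x.
Proof. by rewrite /comm; gnorm. Qed.
Lemma commMr (G : Grp) (x y w : G) : comm x (y * w) = comm x w * conj (comm x y) w.
Proof. by rewrite /comm /conj; gnorm. Qed.
Lemma commMl (G : Grp) (x y w : G) : comm (x * w) y = conj (comm x y) w * comm w y.
Proof. by rewrite /comm /conj; gnorm. Qed.
Lemma commgg (G : Grp) (x : G) : comm x x = g1.
Proof. by rewrite /comm; gnorm. Qed.
Lemma comm1P (G : Grp) (x y : G) : comm x y = g1 -> x * y = y * x.
Proof. move=> h; have e : y * x * comm x y = x * y by rewrite /comm; gnorm.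
by rewrite -e h mulg1. Qed.
Lemma comm1 (G : Grp) (x y : G) : x * y = y * x -> comm x y = g1.
Proof. by rewrite /comm => h; rewrite -mulgA h -invMg mulVg. Qed.
Lemma comm_xxy (G : Grp) (x y : G) : comm x (x * y) = comm x y.
Proof. by rewrite commMr commgg conj1 mulg1. Qed.

Record cent (G : Grp) (Z : G -> Prop) := Cent {
  cZ1 : Z g1;
  cZM : forall x y, Z x -> Z y -> Z (x * y);
  cZV : forall x, Z x -> Z x^-1;
  cZC : forall x y, Z x -> x * y = y * x }.

Lemma zC (G : Grp) Z (HZ : @cent G Z) (z y : G) : Z z -> z * y = y * z.
Proof. exact: cZC. Qed.
Lemma conjz (G : Grp) Z (HZ : @cent G Z) (z g : G) : Z z -> conj z g = z.
Proof. by move=> hz; rewrite /conj -mulgA (zC HZ g hz) mulKg. Qed.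
Lemma conj_byz (G : Grp) Z (HZ : @cent G Z) (x z : G) : Z z -> conj x z = x.
Proof. by move=> hz; rewrite /conj -mulgA -(zC HZ x hz) mulKg. Qed.
Lemma commzl (G : Grp) Z (HZ : @cent G Z) (z x : G) : Z z -> comm z x = g1.
Proof. by move=> hz; apply: comm1; exact: (zC HZ x hz). Qed.
Lemma commzr (G : Grp) Z (HZ : @cent G Z) (x z : G) : Z z -> comm x z = g1.
Proof. by move=> hz; apply: comm1; symmetry; exact: (zC HZ x hz). Qed.
Lemma commMz_l (G : Grp) Z (HZ : @cent G Z) (x z y : G) : Z z -> comm (x * z) y = comm x y.
Proof. by move=> hz; rewrite commMl (conj_byz HZ _ hz) (commzl HZ _ hz) mulg1. Qed.
Lemma commzM_l (G : Grp) Z (HZ : @cent G Z) (x z y : G) : Z z -> comm (z * x) y = comm x y.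
Proof. by move=> hz; rewrite (zC HZ x hz) (commMz_l HZ _ _ hz). Qed.
Lemma commMz_r (G : Grp) Z (HZ : @cent G Z) (x z y : G) : Z z -> comm x (y * z) = comm x y.
Proof. by move=> hz; rewrite commMr (conj_byz HZ _ hz) (commzr HZ _ hz) mul1g. Qed.
Lemma commzM_r (G : Grp) Z (HZ : @cent G Z) (x z y : G) : Z z -> comm x (z * y) = comm x y.
Proof. by move=> hz; rewrite (zC HZ y hz) (commMz_r HZ _ _ hz). Qed.
Lemma conj_commZ (G : Grp) Z (HZ : @cent G Z) (x y g : G) :
  Z (comm x g) -> Z (comm y g) -> conj (comm x y) g = comm x y.
Proof.
move=> h1 h2; rewrite conj_comm !conjE (commMz_l HZ _ _ h1) (commMz_r HZ _ _ h2) //.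
Qed.
Lemma commV_r (G : Grp) Z (HZ : @cent G Z) (x y : G) : Z (comm x y) -> comm x y^-1 = (comm x y)^-1.
Proof.
move=> h; have e := commMr x y (y^-1).
rewrite mulgV (conjz HZ _ h) (commzr HZ _ (cZ1 HZ)) in e.
symmetry; apply: invg_eq. by rewrite (zC HZ _ h) -e.
Qed.
Lemma Zcomm_sym (G : Grp) Z (HZ : @cent G Z) (x y : G) : Z (comm x y) -> Z (comm y x).
Proof. by move=> h; rewrite -commVg; apply: (cZV HZ). Qed.
Lemma commV_l (G : Grp) Z (HZ : @cent G Z) (x y : G) : Z (comm x y) -> comm x^-1 y = (comm x y)^-1.
Proof.
move=> h; rewrite -commVg (commV_r HZ) ?invgK ?commVg //; exact: Zcomm_sym.
Qed.
Lemma commMzz (G : Grp) Z (HZ : @cent G Z) (c x y : G) :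
  Z (comm c x) -> Z (comm c y) -> comm c (x * y) = comm c x * comm c y.
Proof. by move=> h1 h2; rewrite commMr (conjz HZ _ h1) (zC HZ _ h2). Qed.
Lemma ZcommV_r (G : Grp) Z (HZ : @cent G Z) (x y : G) : Z (comm x y) -> Z (comm x y^-1).
Proof. by move=> h; rewrite (commV_r HZ h); apply: (cZV HZ). Qed.
Lemma ZcommV_l (G : Grp) Z (HZ : @cent G Z) (x y : G) : Z (comm x y) -> Z (comm x^-1 y).
Proof. by move=> h; rewrite (commV_l HZ h); apply: (cZV HZ). Qed.
Lemma ZcommM_r (G : Grp) Z (HZ : @cent G Z) (c x y : G) :
  Z (comm c x) -> Z (comm c y) -> Z (comm c (x * y)).
Proof. by move=> h1 h2; rewrite (commMzz HZ h1 h2); apply: (cZM HZ). Qed.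

Lemma pow0 (G : Grp) (x : G) : pow x 0 = g1. Proof. by []. Qed.
Lemma powS (G : Grp) (x : G) k : pow x k.+1 = x * pow x k. Proof. by []. Qed.
Lemma pow1g (G : Grp) k : pow (g1 : G) k = g1.
Proof. by elim: k => //= k ->; rewrite mulg1. Qed.
Lemma powD (G : Grp) (x : G) a b : pow x (a + b) = pow x a * pow x b.
Proof. by elim: a => [|a IH] /=; rewrite ?mul1g // IH mulgA. Qed.
Lemma powSr (G : Grp) (x : G) k : pow x k.+1 = pow x k * x.
Proof. by rewrite -addn1 powD /= mulg1. Qed.
Lemma pow_commx (G : Grp) (x : G) k : x * pow x k = pow x k * x.
Proof. by rewrite -powS powSr. Qed.
Lemma powM (G : Grp) (x : G) a b : pow x (a * b) = pow (pow x a) b.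
Proof. by elim: b => [|b IH]; rewrite ?muln0 // mulnS powD IH. Qed.
Lemma pow_commute (G : Grp) (x y : G) k : x * y = y * x -> pow x k * y = y * pow x k.
Proof.
move=> h; elim: k => [|k IH] /=; first by rewrite mul1g mulg1.
by rewrite -mulgA IH !mulgA h.
Qed.
Lemma powMc (G : Grp) (x y : G) k : x * y = y * x -> pow (x * y) k = pow x k * pow y k.
Proof.
move=> h; elim: k => [|k IH] /=; first by rewrite mulg1.
rewrite IH !mulgA; congr (_ * _); rewrite -!mulgA; congr (_ * _).
by rewrite (pow_commute _ h).
Qed.
Lemma powV (G : Grp) (x : G) k : pow x^-1 k = (pow x k)^-1.
Proof.
elim: k => [|k IH] /=; first by rewrite inv1g.
by rewrite IH -invMg pow_commx.
Qed.
Lemma powZ (G : Grp) Z (HZ : @cent G Z) (x : G) k : Z x -> Z (pow x k).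
Proof. move=> h; elim: k => [|k IH] /=; [exact: (cZ1 HZ) | exact: (cZM HZ)]. Qed.
Lemma powzM (G : Grp) Z (HZ : @cent G Z) (x y : G) k : Z x -> pow (x * y) k = pow x k * pow y k.
Proof. by move=> h; apply: powMc; apply: (zC HZ). Qed.
Lemma powMz (G : Grp) Z (HZ : @cent G Z) (x y : G) k : Z y -> pow (x * y) k = pow x k * pow y k.
Proof. by move=> h; apply: powMc; symmetry; apply: (zC HZ). Qed.

Lemma conj_pow (G : Grp) Z (HZ : @cent G Z) (e y : G) k :
  Z (comm e y) -> conj e (pow y k) = e * pow (comm e y) k.
Proof.
move=> h; elim: k => [|k IH]; first by rewrite /= conjg1 mulg1.
by rewrite powS conjMr (conjE e y) conjM IH (conjz HZ _ h) powS -mulgA -pow_commx.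
Qed.
Lemma comm_pow_r (G : Grp) Z (HZ : @cent G Z) (x y : G) k :
  Z (comm x y) -> comm x (pow y k) = pow (comm x y) k.
Proof.
move=> h; elim: k => [|k IH]; first by rewrite /= (commzr HZ _ (cZ1 HZ)).
by rewrite powS (commMzz HZ h) ?IH //; apply: (powZ HZ).
Qed.
Lemma comm_pow_l (G : Grp) Z (HZ : @cent G Z) (x y : G) k :
  Z (comm x y) -> comm (pow x k) y = pow (comm x y) k.
Proof.
move=> h; rewrite -(commVg y (pow x k)) (comm_pow_r HZ).
  by rewrite -powV commVg.
by move: (Zcomm_sym HZ h).
Qed.
Lemma HP_r (G : Grp) Z (HZ : @cent G Z) (x y : G) k :
  Z (comm (comm x y) y) ->
  comm x (pow y k) = pow (comm x y) k * pow (comm (comm x y) y) 'C(k, 2).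
Proof.
move=> h; elim: k => [|k IH]; first by rewrite /= (commzr HZ _ (cZ1 HZ)) mulg1.
rewrite powS commMr IH (conj_pow HZ _ h) binS bin1 powD.
set q := comm (comm x y) y; set e := comm x y.
have hq : forall j, Z (pow q j) by move=> j; apply: (powZ HZ).
clearbody q e.
rewrite powSr -!mulgA; congr (_ * _).
by rewrite mulgA (zC HZ e (hq _)) -mulgA.
Qed.
Lemma HP_l (G : Grp) Z (HZ : @cent G Z) (x y : G) k :
  Z (comm (comm x y) x) ->
  comm (pow x k) y = pow (comm x y) k * pow (comm (comm x y) x) 'C(k, 2).
Proof.
move=> h; elim: k => [|k IH]; first by rewrite /= (commzl HZ _ (cZ1 HZ)) mulg1.
rewrite powS commMl IH (conj_pow HZ _ h) binS bin1 powD.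
set q := comm (comm x y) x; set e := comm x y.
have hq : forall j, Z (pow q j) by move=> j; apply: (powZ HZ).
clearbody q e.
rewrite powS -!mulgA; congr (_ * _).
rewrite mulgA (zC HZ (pow e k) (hq k)) -mulgA; congr (_ * _).
exact: (zC HZ _ (hq k)).
Qed.
Lemma pow_gcd (G : Grp) (x : G) a b : pow x a = g1 -> pow x b = g1 -> pow x (gcdn a b) = g1.
Proof.
elim: a {-2}a (leqnn a) b => [|N IH] a Ha b ha hb.
  by move: Ha; rewrite leqn0 => /eqP ->; rewrite gcd0n.
case: (posnP a) => [->|a0]; first by rewrite gcd0n.
rewrite -gcdn_modr gcdnC; apply: IH => //.
  by rewrite -ltnS (leq_trans (ltn_pmod b a0) Ha).
by move: hb; rewrite {1}(divn_eq b a) powD mulnC powM ha pow1g mul1g.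
Qed.
Lemma ZinvD (G : Grp) Z (HZ : @cent G Z) (x y : G) : Z (x * y^-1) -> Z (y * x^-1).
Proof. by move=> h; have := cZV HZ h; rewrite invMg invgK. Qed.
Lemma comm_eqz_l (G : Grp) Z (HZ : @cent G Z) (x y w : G) : Z (x * y^-1) -> comm x w = comm y w.
Proof. by move=> h; rewrite -[x](mulgKV x y) (commzM_l HZ _ _ h). Qed.
Lemma comm_eqz_r (G : Grp) Z (HZ : @cent G Z) (x y w : G) : Z (x * y^-1) -> comm w x = comm w y.
Proof. by move=> h; rewrite -[x](mulgKV x y) (commzM_r HZ _ _ h). Qed.
Lemma powc_l (G : Grp) Z (HZ : @cent G Z) (x y w : G) k :
  Z (comm x w) -> Z (comm y w) -> Z (pow x k * (pow y k)^-1) -> pow (comm x w) k = pow (comm y w) k.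
Proof. by move=> h1 h2 h; rewrite -(comm_pow_l HZ _ h1) -(comm_pow_l HZ _ h2) (comm_eqz_l HZ _ h). Qed.
Lemma powc_r (G : Grp) Z (HZ : @cent G Z) (x y w : G) k :
  Z (comm w x) -> Z (comm w y) -> Z (pow x k * (pow y k)^-1) -> pow (comm w x) k = pow (comm w y) k.
Proof. by move=> h1 h2 h; rewrite -(comm_pow_r HZ _ h1) -(comm_pow_r HZ _ h2) (comm_eqz_r HZ _ h). Qed.
Lemma combine1 (G : Grp) Z (HZ : @cent G Z) (a b : G) k :
  Z b -> pow a k = pow b k -> pow (a * b^-1) k = g1.
Proof. by move=> hb e; rewrite (powMz HZ) ?powV ?e ?mulgV //; apply: (cZV HZ). Qed.
Lemma powZdiv (G : Grp) Z (HZ : @cent G Z) (A B : G) m1 m2 :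
  m1 %| m2 -> Z (pow A m1 * (pow B m1)^-1) -> Z (pow B m2) -> Z (pow A m2).
Proof.
move=> /dvdnP [q ->] h hB; rewrite mulnC powM -[pow A m1](mulgKV _ (pow B m1)) (powzM HZ) //.
apply: (cZM HZ (powZ HZ q h)); by rewrite -powM mulnC.
Qed.

Lemma item1 (G : Grp) Z (HZ : @cent G Z) (A B : G) m1 :
  Z (comm A B) -> Z (pow A m1 * (pow B m1)^-1) -> pow (comm A B) m1 = g1.
Proof.
move=> h hp; rewrite -(comm_pow_l HZ _ h) (comm_eqz_l HZ _ hp) (comm_pow_l HZ).
  by rewrite commgg pow1g.
by rewrite commgg; apply: (cZ1 HZ).
Qed.

Lemma item2 (G : Grp) Z (HZ : @cent G Z) (Ai Bi Aj Bj : G) m1 m2 :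
  m1 %| m2 ->
  Z (comm Ai Aj) -> Z (comm Ai Bj) -> Z (comm Bi Aj) -> Z (comm Bi Bj) ->
  Z (pow Ai m1 * (pow Bi m1)^-1) -> Z (pow Aj m1 * (pow Bj m1)^-1) -> Z (pow Bj m2) ->
  [/\ pow (comm Ai Aj) m2 = g1,
      pow (comm Bi Bj * (comm Ai Aj)^-1) m1 = g1,
      pow (comm Bi Aj * (comm Bi Bj)^-1) m1 = g1 &
      pow (comm Ai Bj * (comm Bi Bj)^-1) m1 = g1].
Proof.
move=> hd hAA hAB hBA hBB hpi hpj hB2.
have e1 : pow (comm Ai Aj) m1 = pow (comm Bi Aj) m1 by apply: (powc_l HZ).
have e2 : pow (comm Bi Aj) m1 = pow (comm Bi Bj) m1 by apply: (powc_r HZ).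
have e3 : pow (comm Ai Bj) m1 = pow (comm Bi Bj) m1 by apply: (powc_l HZ).
split.
- by rewrite -(comm_pow_r HZ _ hAA) (commzr HZ) //; exact: (powZdiv HZ hd hpj hB2).
- by apply: (combine1 HZ) => //; rewrite e1 e2.
- by apply: (combine1 HZ).
- by apply: (combine1 HZ).
Qed.
Lemma conjDef (G : Grp) (x g : G) : conj x g = g^-1 * x * g. Proof. by []. Qed.
Lemma zK (G : Grp) Z (HZ : @cent G Z) (a g b : G) : Z g -> a * g * b * g^-1 = a * b.
Proof. by move=> h; rewrite -(mulgA a) (zC HZ b h) mulgA mulgK. Qed.
Lemma zKV (G : Grp) Z (HZ : @cent G Z) (a g b : G) : Z g -> a * g^-1 * b * g = a * b.
Proof. by move=> h; rewrite -(mulgA a) (zC HZ b (cZV HZ h)) mulgA mulgKV. Qed.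

Lemma phiX (G : Grp) Z (HZ : @cent G Z) (X D t : G) :
  Z (comm X^-1 D^-1 * t^-1) -> exists2 z, Z z & conj X D^-1 = t^-1 * (z * X).
Proof.
move=> h; exists ((comm X^-1 D^-1 * t^-1)^-1); first exact: (cZV HZ h).
by rewrite -[X in LHS]invgK conjV conjE; gnorm.
Qed.

Lemma Tconj (G : Grp) Z (HZ : @cent G Z) (X C D t : G) :
  Z (comm X^-1 D^-1 * t^-1) -> Z (comm C D) -> Z (comm t C) ->
  conj (comm X C) D = comm X C * comm t C.
Proof.
move=> hQ hCD htC; have [z hz e] := phiX HZ hQ.
have e1 : conj (comm X C) D^-1 = (comm t C)^-1 * comm X C.
  rewrite conj_comm e (conjE C D^-1) (commMz_r HZ _ _ (ZcommV_r HZ hCD)).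
  rewrite (zC HZ X hz) mulgA (commMz_l HZ _ _ hz) commMl (commV_l HZ htC).
  by rewrite (conjz HZ _ (cZV HZ htC)).
have e2 := conjKV (comm X C) D.
rewrite e1 conjM (conjz HZ _ (cZV HZ htC)) in e2.
move: e2; set W := conj _ D; set y := comm X C; set g := comm t C.
clearbody W y => e2.
by rewrite -e2 -mulgA -(zC HZ W htC) mulKg.
Qed.

Lemma conjXD (G : Grp) Z (HZ : @cent G Z) (X D t g : G) :
  Z (comm X^-1 D^-1 * t^-1) -> Z g -> conj t D = t * g ->
  exists2 z, Z z & conj X D = z * (t * X).
Proof.
move=> hQ hg htD; have [z hz e] := phiX HZ hQ.
have e2 := conjKV X D.
rewrite e !conjM conjV htD (conjz HZ _ hz) in e2.
move: e2; set W := conj X D; clearbody W => e2.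
exists (z^-1 * g); first exact: (cZM HZ (cZV HZ hz) hg).
rewrite -e2; gnorm.
by rewrite (zK HZ _ _ hg); gnorm.
Qed.

Lemma Wlem (G : Grp) Z (HZ : @cent G Z) (X D t z : G) :
  Z z -> Z (comm t X) -> conj X D = z * (t * X) -> Z (comm X D * t^-1).
Proof.
move=> hz ha e; rewrite commE e.
have -> : X^-1 * (z * (t * X)) * t^-1 = z * comm t X.
  rewrite mulgA -(zC HZ X^-1 hz) -(mulgA z X^-1 (t * X)) (mulgA X^-1 t X) -conjDef conjE.
  by rewrite -(zC HZ t ha) mulgA mulgK.
exact: (cZM HZ hz ha).
Qed.
Lemma comm_commZ (G : Grp) Z (HZ : @cent G Z) (x y g : G) :
  Z (comm g x) -> Z (comm g y) -> comm (comm x y) g = g1.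
Proof.
move=> hx hy; rewrite commE (conj_commZ HZ (Zcomm_sym HZ hx) (Zcomm_sym HZ hy)) mulVg //.
Qed.
Lemma conjV_triv (G : Grp) (x g : G) : comm x g = g1 -> conj x g^-1 = x.
Proof.
move=> h; have e : conj x g = x by rewrite conjE h mulg1.
by rewrite -{1}e conjK.
Qed.
Lemma commz_val (G : Grp) (x D g : G) : conj x D = x * g -> comm x D = g.
Proof. by move=> e; rewrite commE e mulKg. Qed.

Lemma pairD (G : Grp) Z (HZ : @cent G Z) (A B C D : G) :
  Z (comm A B) -> Z (comm C D) ->
  Z (comm A^-1 D^-1 * (comm B C)^-1) -> Z (comm B^-1 D^-1 * (comm B C)^-1) ->
  Z (comm (comm B C) A) -> Z (comm (comm B C) C) ->
  [/\ comm (comm B C) D = comm (comm B C) C,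
      comm (comm A C) D = comm (comm B C) C,
      comm (comm B C) B = comm (comm B C) A,
      comm (comm A C) B = comm (comm B C) A &
      [/\ exists2 w, Z w & comm A D = w * comm B C,
          exists2 w, Z w & comm B D = w * comm B C,
          (exists2 z, Z z & conj A D = z * (comm B C * A)) &
          comm (comm A C) (comm B C) = g1]].
Proof.
move=> hAB hCD hQa hQb htA htC.
set t := comm B C in hQa hQb htA htC *.
have tD := Tconj HZ hQb hCD htC; rewrite -/t in tD.
have cD := Tconj HZ hQa hCD htC.
have [zA hzA eA] := conjXD HZ hQa htC tD.
have [zB hzB eB] := conjXD HZ hQb htC tD.
have F0 : comm (comm A C) t = g1.
  apply: (comm_commZ HZ) => //; exact: (Zcomm_sym HZ (Zcomm_sym HZ htC)).
have B1 : comm t B = comm t A.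
  have e := conj_comm A B D.
  rewrite (conjz HZ _ hAB) eA eB (commzM_l HZ _ _ hzA) (commzM_r HZ _ _ hzB) in e.
  rewrite commMl comm_xxy commMr (conjz HZ _ (Zcomm_sym HZ htA)) -(commVg t A) in e.
  have hP : conj (comm t B) A = comm t A.
    move: e; set P := conj (comm t B) A; set y := comm A B; set a := comm t A => e.
    have hy : Z y := hAB.
    move: e hy; clearbody P y a => e hy.
    rewrite -(mulgK P (y * a^-1)) -e invMg invgK mulgA (zC HZ a hy).
    by rewrite mulgK.
  by rewrite -[comm t B](conjK _ A) hP (conjz HZ _ htA).
have B2 : comm (comm A C) B = comm t A.
  apply: commz_val; rewrite conj_comm !conjE (commMz_l HZ _ _ hAB) -(commVg B C) -/t.
  rewrite commMr (commV_r HZ (Zcomm_sym HZ htA)) commVg (conjV_triv F0).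
  by rewrite (zC HZ _ htA).
have WA := Wlem HZ hzA htA eA.
have WB := Wlem HZ hzB (eq_ind_r Z htA B1) eB.
split => //; try exact: commz_val.
split => //.
- by exists (comm A D * t^-1) => //; rewrite mulgKV.
- by exists (comm B D * t^-1) => //; rewrite mulgKV.
- by exists zA.
Qed.
Lemma combine2 (G : Grp) Z (HZ : @cent G Z) (a1 a2 b1 b2 : G) k :
  Z a1 -> Z a2 -> Z b1 -> Z b2 -> pow a1 k = pow b1 k -> pow a2 k = pow b2 k ->
  pow (a1 * a2^-1 * (b1 * b2^-1)^-1) k = g1.
Proof.
move=> h1 h2 h3 h4 e1 e2; apply: (combine1 HZ); first exact: (cZM HZ h3 (cZV HZ h4)).
by rewrite !(powMz HZ) ?powV ?e1 ?e2 //; apply: (cZV HZ).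
Qed.
Lemma abel2 (G : Grp) Z (HZ : @cent G Z) (p q x1 x2 y1 y2 : G) :
  Z x1 -> Z x2 -> Z y1 -> Z y2 -> p * x1 = q * y1 -> p * x2 = q * y2 ->
  x1 * x2^-1 = y1 * y2^-1.
Proof.
move=> h1 h2 h3 h4 e1 e2.
have E : forall r u v, Z u -> Z v -> r * u * (r * v)^-1 = u * v^-1.
  move=> r u v hu hv; rewrite invMg -(mulgA r) (mulgA u) (zC HZ r^-1 (cZM HZ hu (cZV HZ hv))).
  by rewrite mulKVg.
by rewrite -(E p) // e1 e2 E.
Qed.

Lemma mulg_id1 (G : Grp) (a x : G) : a * x = x -> a = g1.
Proof. by move=> e; rewrite -(mulgK a x) e mulgV. Qed.
Lemma mulg_eqr (G : Grp) (a b x : G) : a * x = b * x -> a = b.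
Proof. by move=> e; rewrite -(mulgK a x) e mulgK. Qed.

Lemma item3 (G : Grp) Z (HZ : @cent G Z) (A B C D : G) m1 :
  Z (comm A B) -> Z (comm C D) ->
  Z (comm A^-1 D^-1 * (comm B C)^-1) -> Z (comm B^-1 D^-1 * (comm B C)^-1) ->
  Z (comm (comm B C) A) -> Z (comm (comm B C) C) ->
  Z (pow A m1 * (pow B m1)^-1) -> Z (pow C m1 * (pow D m1)^-1) ->
  pow (comm A D * (comm B C)^-1) m1 = g1 /\ pow (comm B D * (comm B C)^-1) m1 = g1.
Proof.
move=> hAB hCD hQa hQb htA htC hpi hpC.
have [tD cD tB cB [[w1 hw1 e1] [w2 hw2 e2] _ F0]] := pairD HZ hAB hCD hQa hQb htA htC.
set t := comm B C in e1 e2 tD cD tB cB F0 htA htC *.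
rewrite e1 e2 !mulgK.
have hZAD : Z (comm (comm A D) D) by rewrite e1 (commzM_l HZ _ _ hw1) tD.
have hZBD : Z (comm (comm B D) D) by rewrite e2 (commzM_l HZ _ _ hw2) tD.
have hZA : Z (comm (comm A D) A) by rewrite e1 (commzM_l HZ _ _ hw1).
have hZB : Z (comm (comm B D) B) by rewrite e2 (commzM_l HZ _ _ hw2) tB.
have W2 : pow w2 m1 = g1.
  have E := comm_eqz_r HZ B (ZinvD HZ hpC).
  rewrite (HP_r HZ _ hZBD) (HP_r HZ _ htC) e2 (commzM_l HZ _ _ hw2) tD (powzM HZ _ _ hw2) in E.
  rewrite -/t in E.
  by rewrite -mulgA in E; apply: (mulg_id1 E).
have E := comm_eqz_l HZ D hpi.
rewrite (HP_l HZ _ hZA) (HP_l HZ _ hZB) e1 e2 !(commzM_l HZ _ _ hw1) !(commzM_l HZ _ _ hw2) tB in E.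
rewrite !(powzM HZ _ _ hw1) !(powzM HZ _ _ hw2) W2 mul1g -!mulgA in E.
by split => //; apply: (mulg_id1 E).
Qed.
Lemma item4 (G : Grp) Z (HZ : @cent G Z) (A B C D : G) m1 m2 :
  m1 %| m2 ->
  Z (comm A B) -> Z (comm C D) ->
  Z (comm A^-1 D^-1 * (comm B C)^-1) -> Z (comm B^-1 D^-1 * (comm B C)^-1) ->
  Z (comm (comm B C) A) -> Z (comm (comm B C) C) ->
  Z (comm (comm A C) A) -> Z (comm (comm A C) C) ->
  Z (pow A m1 * (pow B m1)^-1) -> Z (pow B m2) ->
  Z (pow C m1 * (pow D m1)^-1) -> Z (pow D m2) ->
  [/\ pow (comm (comm A C) A) m2 = g1,
      pow (comm (comm A C) (C * A^-1)) (gcdn m2 'C(m2, 2)) = g1,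
      pow (comm (comm A C) (B * A^-1)) m1 = g1 &
      pow (comm (comm A C) (B * D^-1 * (A * C^-1)^-1)) (gcdn m1 'C(m1, 2)) = g1].
Proof.
move=> hd hAB hCD hQa hQb htA htC hcA hcC hpi hB2 hpC hD2.
have [tD cD tB cB [[w1 hw1 e1] _ _ F0]] := pairD HZ hAB hCD hQa hQb htA htC.
have [W1 _] := item3 HZ hAB hCD hQa hQb htA htC hpi hpC.
rewrite e1 mulgK in W1.
have hA2 := powZdiv HZ hd hpi hB2.
have hC2 := powZdiv HZ hd hpC hD2.
set c := comm A C in cD cB F0 hcA hcC *.
set t := comm B C in e1 tD cD tB cB F0 htA htC hQa hQb.
have hcB : Z (comm c B) by rewrite cB.
have hcD : Z (comm c D) by rewrite cD.
split.
- by rewrite -(comm_pow_r HZ _ hcA) (commzr HZ _ hA2).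
- rewrite (commMzz HZ hcC (ZcommV_r HZ hcA)) (commV_r HZ hcA).
  apply: pow_gcd; apply: (combine1 HZ) => //.
    by rewrite -(comm_pow_r HZ _ hcA) -(comm_pow_r HZ _ hcC) (commzr HZ _ hA2) (commzr HZ _ hC2).
  have eA := HP_l HZ m2 hcA; have eC := HP_r HZ m2 hcC.
  rewrite (commzl HZ _ hA2) in eA; rewrite (commzr HZ _ hC2) in eC.
  by apply: (mulgI (x := pow c m2)); rewrite -eA -eC.
- rewrite (commMzz HZ hcB (ZcommV_r HZ hcA)) (commV_r HZ hcA).
  by apply: (combine1 HZ) => //; apply: (powc_r HZ hcB hcA (ZinvD HZ hpi)).
have hBD : Z (comm c (B * D^-1)) := ZcommM_r HZ hcB (ZcommV_r HZ hcD).
have hAC : Z (comm c (A * C^-1)) := ZcommM_r HZ hcA (ZcommV_r HZ hcC).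
rewrite (commMzz HZ hBD (ZcommV_r HZ hAC)) (commV_r HZ hAC).
rewrite (commMzz HZ hcB (ZcommV_r HZ hcD)) (commV_r HZ hcD).
rewrite (commMzz HZ hcA (ZcommV_r HZ hcC)) (commV_r HZ hcC).
apply: pow_gcd.
  apply: (combine2 HZ hcB hcD hcA hcC).
    exact: (powc_r HZ hcB hcA (ZinvD HZ hpi)).
  exact: (powc_r HZ hcD hcC (ZinvD HZ hpC)).
rewrite cB cD.
have hZtB : Z (comm t B) by rewrite tB.
have hZAD : Z (comm (comm A D) D) by rewrite e1 (commzM_l HZ _ _ hw1) tD.
have ED : pow c m1 * pow (comm c A) 'C(m1, 2) = pow t m1 * pow (comm t A) 'C(m1, 2).
  have E := comm_eqz_l HZ C hpi.
  by rewrite (HP_l HZ _ hcA) (HP_l HZ _ hZtB) tB in E.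
have EE : pow c m1 * pow (comm c C) 'C(m1, 2) = pow t m1 * pow (comm t C) 'C(m1, 2).
  have E := comm_eqz_r HZ A (ZinvD HZ hpC).
  rewrite (HP_r HZ _ hcC) (HP_r HZ _ hZAD) e1 (commzM_l HZ _ _ hw1) tD in E.
  by rewrite (powzM HZ _ _ hw1) W1 mul1g in E.
move: ED EE htA htC hcA hcC.
generalize (comm t A) (comm t C) (comm c A) (comm c C) (pow t m1) (pow c m1) 'C(m1, 2).
move=> a1 b1 a2 b2 p q k ED EE h1 h2 h3 h4.
apply: (combine1 HZ); first exact: (cZM HZ h3 (cZV HZ h4)).
rewrite (powMz HZ _ _ (cZV HZ h2)) (powMz HZ _ _ (cZV HZ h4)) !powV.
apply: (abel2 HZ (p := p) (q := q)); try exact: (powZ HZ).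
  by rewrite ED.
by rewrite EE.
Qed.
Lemma kappa (G : Grp) Z (HZ : @cent G Z) (X Y W : G) :
  Z (comm X W) -> Z (comm (comm X Y) X) -> Z (comm (comm X Y) Y) ->
  Z (comm (comm Y W) Y) -> Z (comm (comm Y W) W) -> Z (comm (comm X Y) (comm Y W)) ->
  [/\ comm (comm (comm X Y) W) Y = (comm (comm X Y) (comm Y W))^-1,
      comm (comm X Y) W = comm X (comm Y W) * comm (comm X Y) (comm Y W) &
      comm (comm X Y) (comm Y W) * comm (comm X Y) (comm Y W) = g1].
Proof.
move=> hXW hcX hcY heY heW hce.
set c := comm X Y in hcX hcY hce *; set e := comm Y W in heY heW hce *.
set k := comm c e in hce *.
have i1 : comm (comm c W) e = g1 by apply: (comm_commZ HZ) => //; exact: (Zcomm_sym HZ hce).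
have i2 : comm (comm c W) Y = k^-1.
  apply: commz_val; rewrite conj_comm (conjE c Y) (commMz_l HZ _ _ hcY) (conjE W Y).
  rewrite -(commVg Y W) -/e commMr (commV_r HZ hce) (conjV_triv i1).
  by rewrite (zC HZ _ (cZV HZ hce)).
have i3 : comm c W = conj (comm X e) c * k.
  have E1 := conjE c W.
  rewrite /c conj_comm (conjE X W) (commMz_l HZ _ _ hXW) (conjE Y W) -/c -/e in E1.
  rewrite commMr (conjE c e) -/k in E1.
  move: E1; set f := comm X e; set d := comm c W; clearbody f d k => E1.
  by rewrite -[d](mulKg c) -E1 conjDef !mulgA.
have i4 : conj (comm X e) c = comm X e.
  apply: (conj_commZ HZ); [exact: (Zcomm_sym HZ hcX) | exact: (Zcomm_sym HZ hce)].
rewrite i4 in i3.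
have i5 : comm (comm X e) Y = k.
  apply: commz_val; rewrite conj_comm (conjE X Y) (conjE e Y) (commMz_r HZ _ _ heY) -/c.
  by rewrite commMl i4.
split => //.
have := i2; rewrite i3 (commMz_l HZ _ _ hce) i5 => E; by rewrite {1}E mulVg.
Qed.
Lemma mulem (G : Grp) Z (HZ : @cent G Z) (A C D E t z : G) :
  Z z -> conj A D = z * (t * A) -> Z (comm C D) ->
  Z (comm (comm D E) C) -> Z (comm (comm D E) E) -> Z (comm t (comm C E)) ->
  comm (comm A (comm C E)) D = comm t (comm C E).
Proof.
move=> hz eA hCD he'C he'E hte.
have hee' : comm (comm C E) (comm D E) = g1 by apply: (comm_commZ HZ).
have [l hl eD] : exists2 l, Z l & conj (comm C E) D = l * comm C E.
  exists (comm C (comm D E)^-1); first exact: (ZcommV_r HZ (Zcomm_sym HZ he'C)).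
  rewrite conj_comm (conjE C D) (commMz_l HZ _ _ hCD) (conjE E D) -(commVg D E).
  by rewrite commMr (conjV_triv hee').
apply: commz_val; rewrite conj_comm eA eD (commzM_l HZ _ _ hz) (commzM_r HZ _ _ hl).
by rewrite commMl (conjz HZ _ hte) (zC HZ _ hte).
Qed.

Lemma item5 (G : Grp) Z (HZ : @cent G Z) (A B C D E : G) m1 m2 :
  m1 %| m2 ->
  Z (comm A B) -> Z (comm C D) ->
  Z (comm A^-1 D^-1 * (comm B C)^-1) -> Z (comm B^-1 D^-1 * (comm B C)^-1) ->
  Z (comm (comm B C) A) -> Z (comm (comm B C) C) ->
  Z (comm (comm A C) A) -> Z (comm (comm A C) C) ->
  Z (pow C m1 * (pow D m1)^-1) -> Z (pow D m2) ->
  Z (comm A E) -> Z (comm B E) ->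
  Z (comm (comm C E) C) -> Z (comm (comm C E) E) ->
  Z (comm (comm D E) C) -> Z (comm (comm D E) E) ->
  Z (comm (comm A C) (comm C E)) -> Z (comm (comm B C) (comm C E)) ->
  pow (comm (comm (comm A C) E) C) (gcdn 2 m2) = g1 /\
  pow (comm (comm (comm A C) E) (D * C^-1)) (gcdn 2 m1) = g1.
Proof.
move=> hd hAB hCD hQa hQb htA htC hcA hcC hpC hD2 hAE hBE heC heE he'C he'E hce hte.
have [tD cD tB cB [_ _ [z hz eA] F0]] := pairD HZ hAB hCD hQa hQb htA htC.
have htB : Z (comm (comm B C) B) by rewrite tB.
have [dC dform kk] := kappa HZ hAE hcA hcC heC heE hce.
have [_ _ mm] := kappa HZ hBE htB htC heC heE hte.
have hmu := mulem HZ hz eA hCD he'C he'E hte.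
have hC2 := powZdiv HZ hd hpC hD2.
have hdD : comm (comm (comm A C) E) D = comm (comm B C) (comm C E).
  by rewrite dform (commMz_l HZ _ _ hce) hmu.
move: dC hdD kk mm hce hte.
set d := comm (comm A C) E.
set k := comm (comm A C) (comm C E).
set mu := comm (comm B C) (comm C E).
move=> dC hdD kk mm hk hm.
have hdC : Z (comm d C) by rewrite dC; exact: (cZV HZ hk).
have hdD' : Z (comm d D) by rewrite hdD.
split; apply: pow_gcd.
- by rewrite dC /= mulg1 -invMg kk inv1g.
- by rewrite -(comm_pow_r HZ _ hdC) (commzr HZ _ hC2).
- rewrite (commMzz HZ hdD' (ZcommV_r HZ hdC)) (commV_r HZ hdC) hdD dC invgK /= mulg1.
  by rewrite -mulgA (mulgA k mu) (zC HZ mu hk) -(mulgA mu k k) kk mulg1 mm.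
- rewrite (commMzz HZ hdD' (ZcommV_r HZ hdC)) (commV_r HZ hdC).
  apply: (combine1 HZ) => //.
  exact: (powc_r HZ hdD' hdC (ZinvD HZ hpC)).
Qed.

Definition normalK X (K : word X -> Prop) :=
  [/\ K [::], (forall a b, K a -> K b -> K (a ++ b)), (forall a, K a -> K (winv a)),
      (forall a b, feq a b -> K a -> K b) & (forall a g, K a -> K (winv g ++ a ++ g))].

Definition eqv X (K : word X -> Prop) (u v : word X) := K (winv u ++ v).

Lemma eqv_refl X K (HK : @normalK X K) u : eqv K u u.
Proof. case: HK => h1 _ _ hf _; exact: hf (feq_symm (feq_invl u)) h1. Qed.
Lemma eqv_sym X K (HK : @normalK X K) u v : eqv K u v -> eqv K v u.
Proof. by case: HK => _ _ hi _ _ h; have := hi _ h; rewrite /eqv winv_cat winvK. Qed.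
Lemma eqv_trans X K (HK : @normalK X K) u v w : eqv K u v -> eqv K v w -> eqv K u w.
Proof.
case: HK => _ hm _ hf _ h1 h2; have := hm _ _ h1 h2; apply: hf.
rewrite -catA (catA v); apply: feq_catl; apply: (feq_trans (feq_catr _ (feq_invr v))) => /=.
exact: feq_refl.
Qed.
Lemma eqv_cat X K (HK : @normalK X K) u u' v v' :
  eqv K u u' -> eqv K v v' -> eqv K (u ++ v) (u' ++ v').
Proof.
move=> h1 h2; have HK' := HK; case: HK' => _ hm _ hf hc.
have := hm _ _ (hc _ v h1) h2; apply: hf.
rewrite /eqv winv_cat -!catA; apply: feq_catl; rewrite !catA; apply: feq_catr.
rewrite -catA; apply: (feq_trans (feq_catl _ (feq_invr v))); rewrite cats0; exact: feq_refl.
Qed.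
Lemma eqv_inv X K (HK : @normalK X K) u v : eqv K u v -> eqv K (winv u) (winv v).
Proof.
move=> h; have HK' := HK; case: HK' => _ hm hi hf hc.
have := hc _ (winv u) (hi _ h); apply: hf; rewrite /eqv winvK winv_cat winvK.
rewrite -!catA; apply: feq_catl; apply: (feq_trans (feq_catl _ (feq_invr u))).
rewrite cats0; exact: feq_refl.
Qed.
Lemma eqv_feq X K (HK : @normalK X K) u v : feq u v -> eqv K u v.
Proof.
move=> h; case: HK => h1 _ _ hf _; apply: hf h1; apply: feq_symm.
apply: (feq_trans (feq_catl _ (feq_symm h))); exact: feq_invl.
Qed.

Definition qt X (K : word X -> Prop) := {P : word X -> Prop | exists u, P = eqv K u}.
Definition qpi X (K : word X -> Prop) (u : word X) : qt K :=
  exist _ (eqv K u) (ex_intro _ u erefl).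
Definition qrep X (K : word X -> Prop) (x : qt K) : word X :=
  proj1_sig (constructive_indefinite_description _ (proj2_sig x)).
Lemma qrepP X (K : word X -> Prop) (x : qt K) : proj1_sig x = eqv K (qrep x).
Proof. exact: (proj2_sig (constructive_indefinite_description _ (proj2_sig x))). Qed.
Lemma qt_eq X (K : word X -> Prop) (x y : qt K) : proj1_sig x = proj1_sig y -> x = y.
Proof. case: x => P hP; case: y => Q hQ /= e; subst Q; congr exist; exact: proof_irrelevance. Qed.
Lemma qpi_rep X (K : word X -> Prop) (x : qt K) : qpi K (qrep x) = x.
Proof. apply: qt_eq => /=; by rewrite qrepP. Qed.
Lemma qpi_eq X K (HK : @normalK X K) u v : qpi K u = qpi K v <-> eqv K u v.
Proof.
split.
  move/(congr1 (@proj1_sig _ _)) => /= e; rewrite e; exact: eqv_refl.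
move=> h; apply: qt_eq => /=; apply: functional_extensionality => w.
apply: propositional_extensionality; split => h2.
  exact: eqv_trans (eqv_sym HK h) h2.
exact: eqv_trans h h2.
Qed.
Lemma qt_ind X (K : word X -> Prop) (x : qt K) : exists u, x = qpi K u.
Proof. by exists (qrep x); rewrite qpi_rep. Qed.

Definition qmul X (K : word X -> Prop) (x y : qt K) : qt K := qpi K (qrep x ++ qrep y).
Definition qinv X (K : word X -> Prop) (x : qt K) : qt K := qpi K (winv (qrep x)).
Definition qone X (K : word X -> Prop) : qt K := qpi K [::].

Lemma qrep_pi X K (HK : @normalK X K) u : eqv K (qrep (qpi K u)) u.
Proof. by apply/(qpi_eq HK); rewrite qpi_rep. Qed.
Lemma qpi_mul X K (HK : @normalK X K) u v : qpi K (u ++ v) = qmul (qpi K u) (qpi K v).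
Proof. apply/(qpi_eq HK); apply: eqv_sym => //; apply: eqv_cat => //; exact: qrep_pi. Qed.
Lemma qpi_inv X K (HK : @normalK X K) u : qpi K (winv u) = qinv (qpi K u).
Proof. apply/(qpi_eq HK); apply: eqv_sym => //; apply: eqv_inv => //; exact: qrep_pi. Qed.

Lemma qassoc X K (HK : @normalK X K) (x y z : qt K) : qmul x (qmul y z) = qmul (qmul x y) z.
Proof.
have [u ->] := qt_ind x; have [v ->] := qt_ind y; have [w ->] := qt_ind z.
by rewrite -!(qpi_mul HK) catA.
Qed.
Lemma qone_l X K (HK : @normalK X K) (x : qt K) : qmul (qone K) x = x.
Proof. have [u ->] := qt_ind x; by rewrite /qone -(qpi_mul HK). Qed.
Lemma qinv_l X K (HK : @normalK X K) (x : qt K) : qmul (qinv x) x = qone K.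
Proof.
have [u ->] := qt_ind x; rewrite -(qpi_inv HK) -(qpi_mul HK); apply/(qpi_eq HK).
apply: eqv_feq => //; exact: feq_invl.
Qed.

Definition QG X K (HK : @normalK X K) : Grp :=
  @Build_Grp (qt K) (@qmul X K) (@qinv X K) (qone K) (qassoc HK) (qone_l HK) (qinv_l HK).

Lemma piM X K (HK : @normalK X K) u v : (qpi K (u ++ v) : QG HK) = (qpi K u : QG HK) * qpi K v.
Proof. exact: qpi_mul. Qed.
Lemma piV X K (HK : @normalK X K) u : (qpi K (winv u) : QG HK) = (qpi K u : QG HK)^-1.
Proof. exact: qpi_inv. Qed.
Lemma pi1 X K (HK : @normalK X K) : (qpi K [::] : QG HK) = g1.
Proof. by []. Qed.
Lemma piC X K (HK : @normalK X K) u v :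
  (qpi K (wcomm u v) : QG HK) = comm (qpi K u : QG HK) (qpi K v).
Proof. by rewrite /wcomm /wmul !(piM HK) !(piV HK). Qed.
Lemma piP X K (HK : @normalK X K) u k : (qpi K (wpow u k) : QG HK) = pow (qpi K u : QG HK) k.
Proof.
elim: k => [|k IH] //=; by rewrite -IH -(qpi_mul HK).
Qed.
Lemma pi_one X K (HK : @normalK X K) u : (qpi K u : QG HK) = g1 <-> K u.
Proof.
rewrite -(pi1 HK) (qpi_eq HK) /eqv cats0; case: HK => _ _ hi _ _; split => h.
  by have := hi _ h; rewrite winvK.
exact: hi.
Qed.

Definition K0 X (u : word X) := feq u [::].
Lemma HK0 X : normalK (@K0 X).
Proof.
split.
- exact: feq_refl.
- by move=> a b h1 h2; have := feq_cat h1 h2.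
- by move=> a h; have := feq_inv h.
- by move=> a b h1 h2; apply: feq_trans (feq_symm h1) h2.
- move=> a g h; have := feq_catl (winv g) (feq_catr g h) => /= h2.
  exact: feq_trans h2 (feq_invl g).
Qed.
Definition FG X := QG (@HK0 X).
Lemma feq_of X (u v : word X) : (qpi (@K0 X) u : FG X) = qpi (@K0 X) v -> feq u v.
Proof.
move/(qpi_eq (@HK0 X)); rewrite /eqv /K0 => h.
have h1 : feq (u ++ (winv u ++ v)) u.
  have := feq_catl u h; by rewrite cats0.
have h2 : feq (u ++ (winv u ++ v)) v.
  by rewrite catA; apply: (feq_trans (feq_catr v (feq_invr u))); exact: feq_refl.
exact: feq_trans (feq_symm h1) h2.
Qed.
Ltac pi0 := apply: feq_of; rewrite /wcomm /wmul ?winv_cat ?winvK ?(piM (@HK0 _)) ?(piV (@HK0 _)) ?(pi1 (@HK0 _)).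

Lemma ncl_conjg X (S : word X -> Prop) a g : ncl S a -> ncl S (winv g ++ a ++ g).
Proof.
move=> h; elim: h g => {a} [|r h Sr|a b _ IHa _ IHb|a _ IH|a b hab _ IH] g.
- apply: (ncl_feq (feq_symm (feq_invl g))); exact: ncl_one.
- have := @ncl_conj _ S r (h ++ g) Sr; by rewrite /wmul winv_cat -!catA.
- apply: (ncl_feq _ (ncl_mul (IHa g) (IHb g))); rewrite /wmul; pi0; by gnorm.
- have := ncl_inv (IH g); by rewrite winv_cat winvK winv_cat -catA.
- apply: (ncl_feq _ (IH g)); apply: feq_catl; exact: feq_catr.
Qed.

Lemma gsub_conjg X (S : word X -> Prop) :
  (forall a g, S a -> gsub S (winv g ++ a ++ g)) ->
  forall a g, gsub S a -> gsub S (winv g ++ a ++ g).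
Proof.
move=> hS a g h; elim: h g => {a} [|a Sa|a b _ IHa _ IHb|a _ IH|a b hab _ IH] g.
- apply: (gsub_feq (feq_symm (feq_invl g))); exact: gsub_one.
- exact: hS.
- apply: (gsub_feq _ (gsub_mul (IHa g) (IHb g))); rewrite /wmul; pi0; by gnorm.
- have := gsub_inv (IH g); by rewrite winv_cat winvK winv_cat -catA.
- apply: (gsub_feq _ (IH g)); apply: feq_catl; exact: feq_catr.
Qed.

Lemma RF_normal n m1 m2 : normalK (RF n m1 m2).
Proof.
split.
- exact: gsub_one.
- by move=> a b; apply: gsub_mul.
- by move=> a; apply: gsub_inv.
- by move=> a b; apply: gsub_feq.
- apply: gsub_conjg => _ g [r [f [hr ->]]].
  have hb : gsub (fun w => exists r0 f0, Rn n m1 m2 r0 /\ w = wcomm r0 f0)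
               (wcomm (winv g ++ r ++ g) (winv g ++ f ++ g)).
    apply: gsub_base; exists (winv g ++ r ++ g), (winv g ++ f ++ g); split => //.
    exact: ncl_conjg.
  apply: (gsub_feq _ hb); pi0; by gnorm.
Qed.

Definition GG n m1 m2 : Grp := QG (RF_normal n m1 m2).
Definition pi n m1 m2 (u : word (sym n)) : GG n m1 m2 := qpi (RF n m1 m2) u.
Definition ZR n m1 m2 (x : GG n m1 m2) := exists r, Rn n m1 m2 r /\ x = pi m1 m2 r.

Lemma piMw n m1 m2 (u v : word (sym n)) : pi m1 m2 (wmul u v) = pi m1 m2 u * pi m1 m2 v.
Proof. exact: (piM (RF_normal n m1 m2)). Qed.
Lemma piVw n m1 m2 (u : word (sym n)) : pi m1 m2 (winv u) = (pi m1 m2 u)^-1.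
Proof. exact: (piV (RF_normal n m1 m2)). Qed.
Lemma piCw n m1 m2 (u v : word (sym n)) : pi m1 m2 (wcomm u v) = comm (pi m1 m2 u) (pi m1 m2 v).
Proof. exact: (piC (RF_normal n m1 m2)). Qed.
Lemma piPw n m1 m2 (u : word (sym n)) k : pi m1 m2 (wpow u k) = pow (pi m1 m2 u) k.
Proof. exact: (piP (RF_normal n m1 m2)). Qed.

Lemma centZR n m1 m2 : cent (@ZR n m1 m2).
Proof.
split.
- by exists [::]; split => //; exact: ncl_one.
- move=> x y [r1 [h1 ->]] [r2 [h2 ->]]; exists (wmul r1 r2); split; last by rewrite piMw.
  exact: ncl_mul.
- move=> x [r [h ->]]; exists (winv r); split; last by rewrite piVw.
  exact: ncl_inv.
- move=> x y [r [h ->]]; have [f ->] := qt_ind y; apply: comm1P.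
  have -> : (qpi (RF n m1 m2) f : GG n m1 m2) = pi m1 m2 f by [].
  rewrite -piCw; apply/(pi_one (RF_normal n m1 m2)).
  apply: gsub_base; by exists r, f.
Qed.

Lemma relZ n m1 m2 (w : word (sym n)) : Rel n m1 m2 w -> ZR (pi m1 m2 w).
Proof.
move=> h; exists w; split => //.
have := @ncl_conj _ (Rel n m1 m2) w [::] h; by rewrite /wmul /= cats0.
Qed.

Lemma odE n m1 m2 (g : word (sym n)) d : pow (pi m1 m2 g) d = g1 -> ord_dvd n m1 m2 g d.
Proof. by rewrite -piPw => /(pi_one (RF_normal n m1 m2)). Qed.

Lemma R_pA n m1 m2 i : 1 <= i -> i <= n - 1 ->
  ZR (pow (pi m1 m2 (s n i L1)) m1 * (pow (pi m1 m2 (s n i Lx)) m1)^-1).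
Proof.
move=> h1 h2; rewrite -!piPw -piVw -piMw; apply: relZ; left; by exists i.
Qed.
Lemma R_pB n m1 m2 i : 1 <= i -> i <= n - 1 -> ZR (pow (pi m1 m2 (s n i Lx)) m2).
Proof. move=> h1 h2; rewrite -piPw; apply: relZ; right; left; by exists i. Qed.
Lemma R_AB n m1 m2 i : 1 <= i -> i <= n - 1 ->
  ZR (comm (pi m1 m2 (s n i L1)) (pi m1 m2 (s n i Lx))).
Proof. move=> h1 h2; rewrite -piCw; apply: relZ; right; right; left; by exists i. Qed.
Lemma R_dist n m1 m2 i j a b : 1 <= i -> i < j - 1 -> j - 1 <= n - 2 ->
  ZR (comm (pi m1 m2 (s n i a)) (pi m1 m2 (s n j b))).
Proof. move=> h1 h2 h3; rewrite -piCw; apply: relZ; right; right; right; left; by exists i, j, a, b. Qed.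
Lemma R_Q n m1 m2 i a : 1 <= i -> i <= n - 2 ->
  ZR (comm (pi m1 m2 (s n i a))^-1 (pi m1 m2 (s n i.+1 Lx))^-1 *
      (comm (pi m1 m2 (s n i Lx)) (pi m1 m2 (s n i.+1 L1)))^-1).
Proof.
move=> h1 h2; rewrite -(piVw _ _ (s n i a)) -(piVw _ _ (s n i.+1 Lx)) -!piCw -piVw -piMw.
apply: relZ; do 4 right.
by exists i, a; split => //; apply: Or41.
Qed.
Lemma R_c1 n m1 m2 i a : 1 <= i -> i <= n - 2 ->
  ZR (comm (comm (pi m1 m2 (s n i a)) (pi m1 m2 (s n i.+1 L1))) (pi m1 m2 (s n i L1))).
Proof.
move=> h1 h2; rewrite -!piCw; apply: relZ; do 4 right.
by exists i, a; split => //; apply: Or42.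
Qed.
Lemma R_c2 n m1 m2 i a : 1 <= i -> i <= n - 2 ->
  ZR (comm (comm (pi m1 m2 (s n i a)) (pi m1 m2 (s n i.+1 L1))) (pi m1 m2 (s n i.+1 L1))).
Proof.
move=> h1 h2; rewrite -!piCw; apply: relZ; do 4 right.
by exists i, a; split => //; apply: Or43.
Qed.
Lemma R_cc n m1 m2 i a b : 1 <= i -> i <= n - 3 -> i <= n - 2 ->
  ZR (comm (comm (pi m1 m2 (s n i a)) (pi m1 m2 (s n i.+1 L1)))
           (comm (pi m1 m2 (s n i.+1 b)) (pi m1 m2 (s n i.+2 L1)))).
Proof.
move=> h1 h2 h3; rewrite -!piCw; apply: relZ; do 4 right.
by exists i, a; split => //; apply: Or44; split => //; exists b.
Qed.

Close Scope grp_scope.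
Unset Implicit Arguments.

Theorem mainTheorem8 (n m1 m2 : nat) :
  3 <= n -> 0 < m1 -> 0 < m2 -> m1 %| m2 ->
  let s := s n in
  let od := ord_dvd n m1 m2 in
  (* (1) *)
  (forall i, 1 <= i -> i <= n - 1 -> od (wcomm (s i L1) (s i Lx)) m1) /\
  (* (2) *)
  (forall i j, 1 <= i -> i < j - 1 -> j - 1 <= n - 2 ->
     [/\ od (wcomm (s i L1) (s j L1)) m2,
         od (wmul (wcomm (s i Lx) (s j Lx)) (winv (wcomm (s i L1) (s j L1)))) m1,
         od (wmul (wcomm (s i Lx) (s j L1)) (winv (wcomm (s i Lx) (s j Lx)))) m1 &
         od (wmul (wcomm (s i L1) (s j Lx)) (winv (wcomm (s i Lx) (s j Lx)))) m1]) /\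
  (* (3) *)
  (forall i, 1 <= i -> i <= n - 2 ->
     od (wmul (wcomm (s i L1) (s i.+1 Lx)) (winv (wcomm (s i Lx) (s i.+1 L1)))) m1 /\
     od (wmul (wcomm (s i Lx) (s i.+1 Lx)) (winv (wcomm (s i Lx) (s i.+1 L1)))) m1) /\
  (* (4) *)
  (forall i, 1 <= i -> i <= n - 2 ->
     let c := wcomm (s i L1) (s i.+1 L1) in
     [/\ od (wcomm c (s i L1)) m2,
         od (wcomm c (wmul (s i.+1 L1) (winv (s i L1)))) (gcdn m2 'C(m2, 2)),
         od (wcomm c (wmul (s i Lx) (winv (s i L1)))) m1 &
         od (wcomm c (wmul (wmul (s i Lx) (winv (s i.+1 Lx)))
                           (winv (wmul (s i L1) (winv (s i.+1 L1))))))
            (gcdn m1 'C(m1, 2))]) /\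
  (* (5) *)
  (forall i, 1 <= i -> i <= n - 3 ->
     let d := wcomm (wcomm (s i L1) (s i.+1 L1)) (s i.+2 L1) in
     od (wcomm d (s i.+1 L1)) (gcdn 2 m2) /\
     od (wcomm d (wmul (s i.+1 Lx) (winv (s i.+1 L1)))) (gcdn 2 m1)).
Proof.
move=> hn hm1 hm2 hd; cbv zeta.
have HZ := @centZR n m1 m2.
split.
  move=> i h1 h2; apply: odE; rewrite piCw.
  exact: (item1 HZ (R_AB m1 m2 h1 h2) (R_pA m1 m2 h1 h2)).
split.
  move=> i j h1 h2 h3.
  have hi : i <= n - 1 by lia.
  have hj1 : 1 <= j by lia.
  have hj : j <= n - 1 by lia.
  have [e1 e2 e3 e4] := item2 HZ hd (R_dist m1 m2 L1 L1 h1 h2 h3) (R_dist m1 m2 L1 Lx h1 h2 h3)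
     (R_dist m1 m2 Lx L1 h1 h2 h3) (R_dist m1 m2 Lx Lx h1 h2 h3) (R_pA m1 m2 h1 hi) (R_pA m1 m2 hj1 hj) (R_pB m1 m2 hj1 hj).
  by split; apply: odE; rewrite ?piCw ?piMw ?piVw ?piCw.
split.
  move=> i h1 h2.
  have hi : i <= n - 1 by lia.
  have hi1 : 1 <= i.+1 by lia.
  have hi2 : i.+1 <= n - 1 by lia.
  have [e1 e2] := item3 HZ (R_AB m1 m2 h1 hi) (R_AB m1 m2 hi1 hi2) (R_Q m1 m2 L1 h1 h2) (R_Q m1 m2 Lx h1 h2)
     (R_c1 m1 m2 Lx h1 h2) (R_c2 m1 m2 Lx h1 h2) (R_pA m1 m2 h1 hi) (R_pA m1 m2 hi1 hi2).
  by split; apply: odE; rewrite piMw piVw !piCw.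
split.
  move=> i h1 h2.
  have hi : i <= n - 1 by lia.
  have hi1 : 1 <= i.+1 by lia.
  have hi2 : i.+1 <= n - 1 by lia.
  have [e1 e2 e3 e4] := item4 HZ hd (R_AB m1 m2 h1 hi) (R_AB m1 m2 hi1 hi2) (R_Q m1 m2 L1 h1 h2) (R_Q m1 m2 Lx h1 h2)
     (R_c1 m1 m2 Lx h1 h2) (R_c2 m1 m2 Lx h1 h2) (R_c1 m1 m2 L1 h1 h2) (R_c2 m1 m2 L1 h1 h2)
     (R_pA m1 m2 h1 hi) (R_pB m1 m2 h1 hi) (R_pA m1 m2 hi1 hi2) (R_pB m1 m2 hi1 hi2).
  split; apply: odE; rewrite !piCw.
  - exact: e1.
  - by rewrite piMw piVw.
  - by rewrite piMw piVw.
  - by rewrite piMw !piVw !piMw !piVw.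
move=> i h1 h2.
have h2' : i <= n - 2 by lia.
have hi : i <= n - 1 by lia.
have hi1 : 1 <= i.+1 by lia.
have hi2 : i.+1 <= n - 1 by lia.
have hi3 : i.+1 <= n - 2 by lia.
have hE1 : i < i.+2 - 1 by lia.
have hE2 : i.+2 - 1 <= n - 2 by lia.
have [e1 e2] := item5 HZ hd (R_AB m1 m2 h1 hi) (R_AB m1 m2 hi1 hi2) (R_Q m1 m2 L1 h1 h2') (R_Q m1 m2 Lx h1 h2')
     (R_c1 m1 m2 Lx h1 h2') (R_c2 m1 m2 Lx h1 h2') (R_c1 m1 m2 L1 h1 h2') (R_c2 m1 m2 L1 h1 h2')
     (R_pA m1 m2 hi1 hi2) (R_pB m1 m2 hi1 hi2) (R_dist m1 m2 L1 L1 h1 hE1 hE2) (R_dist m1 m2 Lx L1 h1 hE1 hE2)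
     (R_c1 m1 m2 L1 hi1 hi3) (R_c2 m1 m2 L1 hi1 hi3) (R_c1 m1 m2 Lx hi1 hi3) (R_c2 m1 m2 Lx hi1 hi3)
     (R_cc m1 m2 L1 L1 h1 h2 h2') (R_cc m1 m2 Lx L1 h1 h2 h2').
split; apply: odE; rewrite !piCw //.
by rewrite piMw piVw.
Qed.
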